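(* Let $\mathbf{X}$, $\mathbf{A}$ be $\sigma$-structures and $k\ge1$. Then $\mathrm{SA}^k(\mathbf{X},\mathbf{A})$ is feasible if and only if $\mathrm{SA}^1(\mathbf{X}^{*k},\mathbf{A}^{*k})$ is feasible.
   Context: A signature $\sigma$ is a finite set of relation symbols with arities $\operatorname{ar}(R)\ge1$; a $\sigma$-structure $\mathbf{A}$ has finite universe $A$ and relations $R^\mathbf{A}\subseteq A^{\operatorname{ar}(R)}$. Constraints: $\mathcal{C}_\mathbf{A}=\{R(\mathbf{a}):R\in\sigma,\mathbf{a}\in R^\mathbf{A}\}$ (formal symbols). For a tuple $\mathbf{a}$, $a_i$ is its $i$-th entry, $\{\mathbf{a}\}$ its set of entries; for $\mathbf{a}\in A^j$ and $\mathbf{i}=(i_1,\dots,i_n)\in[j]^n$, $\pi_\mathbf{i}\mathbf{a}=(a_{i_1},\dots,a_{i_n})$. $\mathrm{SA}^k(\mathbf{X},\mathbf{A})$: variables $p_V(f)\in[0,1]$ for $V\subseteq X$ with $1\le|V|\le k$ and $f:V\to A$, and $p_{R(\mathbf{x})}(f)\in[0,1]$ for $R(\mathbf{x})\in\mathcal{C}_\mathbf{X}$ and $f:\{\mathbf{x}\}\to A$; constraints: $\sum_{f:V\to A}p_V(f)=1$ for each $V$; $p_U(f)=\sum_{g:V\to A,\,g|_U=f}p_V(g)$ for $U\subseteq V\subseteq X$, $|V|\le k$ (nonempty $U$), $f:U\to A$; $p_U(f)=\sum_{g:\{\mathbf{x}\}\to A,\,g|_U=f}p_{R(\mathbf{x})}(g)$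 for $R(\mathbf{x})\in\mathcal{C}_\mathbf{X}$, nonempty $U\subseteq\{\mathbf{x}\}$ with $|U|\le k$, $f:U\to A$; $p_{R(\mathbf{x})}(f)=0$ whenever $f(\mathbf{x})\notin R^\mathbf{A}$. Feasible means it has a rational solution. ($\mathrm{SA}^1$ is the case $k=1$.) For $k\ge1$, $\mathbf{A}^{*k}$ is the structure with universe $\bigcup_{1\le j\le k}A^j\cup\mathcal{C}_\mathbf{A}$ (disjoint) over signature $\sigma^*_k$ with relations: unary $T_{j,S}=\{\mathbf{a}\in A^j: a_i=a_{i'}\ \forall i,i'\in S\}$ for $j\le k$, $S\subseteq[j]$; binary $T_{j,\mathbf{i}}=\{(\mathbf{a},\pi_\mathbf{i}\mathbf{a}):\mathbf{a}\in A^j\}$ for $j,j'\le k$, $\mathbf{i}\in[j]^{j'}$; unary $R_S=\{R(\mathbf{a}):\mathbf{a}\in R^\mathbf{A},\ a_i=a_{i'}\ \forall i,i'\in S\}$ for $R\in\sigma$, $S\subseteq[\operatorname{ar}(R)]$; binary $R_\mathbf{i}=\{(R(\mathbf{a}),\pi_\mathbf{i}\mathbf{a}):\mathbf{a}\in R^\mathbf{A}\}$ for $R\in\sigma$, $j\le k$, $\mathbf{i}\in[\operatorname{ar}(R)]^j$. *)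

(* Defs.v *)
From HB Require Import structures.
From mathcomp Require Import all_boot all_order all_algebra.
Set Implicit Arguments.
Unset Strict Implicit.
Unset Printing Implicit Defensive.
Import Order.TTheory GRing.Theory Num.Theory.
Local Open Scope ring_scope.

Record signature := Signature { sym : finType; ar : sym -> nat }.

Record sstructure (s : signature) := SStructure {
  univ :> finType;
  rel : forall R : sym s, {set (ar R).-tuple univ} }.

Section SA.
Variables (s : signature) (X A : sstructure s).

Definition cons_of (B : sstructure s) : finType :=
  {R : sym s & {t : (ar R).-tuple B | t \in rel B R}}.

Definition cons_sym (B : sstructure s) (c : cons_of B) : sym s := tag c.
Definition cons_tuple (B : sstructure s) (c : cons_of B) :
  (ar (cons_sym c)).-tuple B := val (tagged c).

(* Partial assignments f : V -> A (V subset of X) are represented as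
   finite functions X -> option A whose domain is V. *)
Definition pfun : finType := {ffun X -> option A}.
Definition dom (f : pfun) : {set X} := [set x | f x != None].
Definition restricts (g f : pfun) : bool := [forall x in dom f, g x == f x].
Definition cset (c : cons_of X) : {set X} := [set y | y \in cons_tuple c].
Definition sat (c : cons_of X) (f : pfun) : bool :=
  [exists a in rel A (cons_sym c),
     [forall i, f (tnth (cons_tuple c) i) == Some (tnth a i)]].

Definition SA_feasible (k : nat) : Prop :=
  exists (p : pfun -> rat) (q : cons_of X -> pfun -> rat),
  [/\ (forall f, (1 <= #|dom f| <= k)%N -> 0 <= p f <= 1) /\
      (forall c f, dom f = cset c -> 0 <= q c f <= 1),
      forall V : {set X}, (1 <= #|V| <= k)%N -> \sum_(f | dom f == V) p f = 1,
      forall (U V : {set X}) (f : pfun),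
        U \subset V -> (1 <= #|U|)%N -> (#|V| <= k)%N -> dom f = U ->
        p f = \sum_(g | (dom g == V) && restricts g f) p g,
      forall c (U : {set X}) (f : pfun),
        U \subset cset c -> (1 <= #|U| <= k)%N -> dom f = U ->
        p f = \sum_(g | (dom g == cset c) && restricts g f) q c g
    & forall c f, dom f = cset c -> ~~ sat c f -> q c f = 0].
End SA.

Section Star.
Variables (s : signature) (k : nat).

(* Lengths j in {1..k} are encoded as j.+1, j : 'I_k.
   - T_{j,S}:  inl (inl (inl (j; S)))          S subset [j]
   - T_{j,i}:  inl (inl (inr ((j,j'); i)))     i in [j]^{j'}
   - R_S:      inl (inr (R; S))                S subset [ar R]
   - R_i:      inr ((R,j); i)                  i in [ar R]^j         *)
Definition star_sym : finType :=
  ({j : 'I_k & {set 'I_j.+1}}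
   + {jj : 'I_k * 'I_k & (jj.2.+1).-tuple 'I_(jj.1.+1)}
   + {R : sym s & {set 'I_(ar R)}}
   + {Rj : sym s * 'I_k & (Rj.2.+1).-tuple 'I_(ar Rj.1)})%type.

Definition star_ar (S : star_sym) : nat :=
  match S with
  | inl (inl (inl _)) => 1
  | inl (inl (inr _)) => 2
  | inl (inr _) => 1
  | inr _ => 2
  end.

Definition star_sig : signature := Signature star_ar.

Variable A : sstructure s.

Definition star_univ : finType :=
  ({j : 'I_k & (j.+1).-tuple A} + cons_of A)%type.

Definition tup (j : 'I_k) (a : (j.+1).-tuple A) : star_univ :=
  inl (@Tagged 'I_k j (fun j : 'I_k => (j.+1).-tuple A) a).
Definition cst (R : sym s) (t : {t : (ar R).-tuple A | t \in rel A R}) :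
  star_univ :=
  inr (@Tagged (sym s) R (fun R => {t : (ar R).-tuple A | t \in rel A R}) t).

Definition proj (n m : nat) (a : n.-tuple A) (i : m.-tuple 'I_n) : m.-tuple A :=
  map_tuple (tnth a) i.

Definition star_rel (S : sym star_sig) : {set (@ar star_sig S).-tuple star_univ} :=
  match S as S0 return {set (star_ar S0).-tuple star_univ} with
  | inl (inl (inl (existT j T))) =>
      [set [tuple tup a] | a : (j.+1).-tuple A
         & [forall i in T, forall i' in T, tnth a i == tnth a i']]
  | inl (inl (inr (existT jj i))) =>
      [set [tuple tup a; tup (proj a i)] | a : (jj.1.+1).-tuple A]
  | inl (inr (existT R T)) =>
      [set [tuple cst t] | t : {t : (ar R).-tuple A | t \in rel A R}
         & [forall i in T, forall i' in T, tnth (val t) i == tnth (val t) i']]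
  | inr (existT Rj i) =>
      [set [tuple cst t; tup (proj (val t) i)]
         | t : {t : (ar Rj.1).-tuple A | t \in rel A Rj.1}]
  end.

Definition star : sstructure star_sig := SStructure star_rel.
End Star.

(* Main.v *)
Require Import Defs.
From HB Require Import structures.
From mathcomp Require Import all_boot all_order all_algebra.
Set Implicit Arguments. Unset Strict Implicit. Unset Printing Implicit Defensive.
Import Order.TTheory GRing.Theory Num.Theory.
Local Open Scope ring_scope.

Lemma sum_bij (I J : finType) (P : pred I) (Q : pred J) (h : J -> I) (F : I -> rat) :
  {in Q &, injective h} -> (forall j, Q j -> P (h j)) ->
  (forall i, P i -> exists2 j, Q j & h j = i) ->
  \sum_(i | P i) F i = \sum_(j | Q j) F (h j).
Proof.
move=> hinj hP hsurj.
rewrite (partition_big h P) //=; apply: eq_bigr => i Pi.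
have [j0 Qj0 hj0] := hsurj i Pi.
rewrite (big_pred1 j0) ?hj0 // => j /=.
apply/andP/eqP => [[Qj /eqP hj]|->]; last by rewrite hj0.
by apply: hinj => //; rewrite hj hj0.
Qed.

Section Gen.
Variables (s : signature) (X A : sstructure s).

Definition ext (x : seq X) (a : seq A) : pfun X A :=
  [ffun y => nth None (map Some a) (index y x)].
Definition consistent (x : seq X) (a : seq A) : bool :=
  map (ext x a) x == map Some a.
Definition pt (u : X) (v : A) : pfun X A :=
  [ffun z => if z == u then Some v else None].

Lemma consistent_size x a : consistent x a -> size a = size x.
Proof. by move/eqP/(congr1 size); rewrite !size_map. Qed.

Lemma ext_nth x a y0 i : consistent x a -> (i < size x)%N ->
  ext x a (nth y0 x i) = nth None (map Some a) i.
Proof. by move/eqP=> <-; move=> lt; rewrite (nth_map y0). Qed.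

Lemma ext_out x a y : size a = size x -> y \notin x -> ext x a y = None.
Proof.
move=> sz yx; rewrite ffunE nth_default // size_map sz.
by rewrite memNindex.
Qed.

Lemma nth_Some (a : seq A) i : (i < size a)%N -> nth None (map Some a) i != None.
Proof. by elim: a i => [|a0 a IH] [|i] //= /IH. Qed.

Lemma ext_in x a y : consistent x a -> y \in x -> ext x a y != None.
Proof.
move=> c yx; rewrite -(nth_index y yx) (ext_nth _ c) ?index_mem //.
by apply: nth_Some; rewrite (consistent_size c) index_mem.
Qed.

Lemma dom_ext x a : consistent x a -> dom (ext x a) = [set y | y \in x].
Proof.
move=> c; apply/setP => y; rewrite !inE.
case: (boolP (y \in x)) => yx; first exact: ext_in.
by rewrite ext_out ?(consistent_size c).
Qed.

Lemma ext_inj x a b : consistent x a -> consistent x b -> ext x a = ext x b -> a = b.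
Proof.
move=> /eqP ca /eqP cb e; apply: (inj_map (@Some_inj _)).
by rewrite -ca -cb e.
Qed.

Lemma map_ext x a (g : pfun X A) : map g x = map Some a ->
  {in x, ext x a =1 g} /\ consistent x a.
Proof.
move=> e; have h : {in x, ext x a =1 g}.
  move=> y yx; rewrite ffunE -e (nth_map y) ?index_mem //.
  by rewrite nth_index.
by split=> //; apply/eqP; rewrite -e; apply/eq_in_map.
Qed.

Lemma ext_eq_dom x a (g : pfun X A) : map g x = map Some a ->
  dom g = [set y | y \in x] -> ext x a = g.
Proof.
move=> e d; have [h c] := map_ext e; apply/ffunP => y.
case: (boolP (y \in x)) => yx; first exact: h.
rewrite ext_out ?(consistent_size c) //.
case E: (g y) => [v|] //.
have : y \in dom g by rewrite inE E.
by rewrite d inE (negbTE yx).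
Qed.

Lemma uniq_consistent x a : uniq x -> size a = size x -> consistent x a.
Proof.
move=> u sz; apply/eqP; apply: (@eq_from_nth _ None); first by rewrite !size_map.
rewrite size_map => i lt; case: x u sz lt => [|y0 x] // u sz lt.
rewrite (nth_map y0) // ffunE index_uniq //.
Qed.

Lemma consistent1 u v : consistent [:: u] [:: v].
Proof. by apply: uniq_consistent. Qed.

Lemma consistent_pair u1 u2 v1 v2 :
  consistent [:: u1; u2] [:: v1; v2] = (u1 == u2) ==> (v1 == v2).
Proof.
rewrite /consistent /= !ffunE /= eqxx /=.
case: (eqVneq u1 u2) => [_|ne] /=.
  by apply/eqP/eqP => [[->]|->].
by rewrite !eqxx.
Qed.

Lemma ext_tnth n (x : n.-tuple X) (a : n.-tuple A) (m : 'I_n) :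
  consistent x a -> ext x a (tnth x m) = Some (tnth a m).
Proof.
move=> c; rewrite (tnth_nth (tnth x m)) (ext_nth _ c) ?size_tuple //.
by rewrite (nth_map (tnth a m)) ?size_tuple // -tnth_nth.
Qed.

Lemma consistent_proj n m (x : n.-tuple X) (a : n.-tuple A) (i : m.-tuple 'I_n) :
  consistent x a -> map (ext x a) (proj x i) = map Some (proj a i).
Proof.
move=> c; rewrite /proj /= -!map_comp; apply: eq_map => z /=.
exact: ext_tnth.
Qed.

Lemma consistent_pairwise n (x : n.-tuple X) (a : n.-tuple A) :
  (forall i j, tnth x i = tnth x j -> tnth a i = tnth a j) -> consistent x a.
Proof.
move=> h; apply/eqP.
have -> : map (ext x a) x = map_tuple (ext x a) x by [].
have -> : map Some a = map_tuple Some a by [].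
congr val; apply/eqP; rewrite eqEtuple; apply/forallP => m; rewrite !tnth_map.
have lt : (index (tnth x m) x < n)%N.
  by have := index_mem (tnth x m) x; rewrite size_tuple mem_tnth.
rewrite ffunE (nth_map (tnth a m)) ?size_tuple // -(tnth_nth _ _ (Ordinal lt)).
by rewrite (h _ m) // (tnth_nth (tnth x m)) /= nth_index // mem_tnth.
Qed.

Lemma sat_map (c : cons_of X) (g : pfun X A) :
  sat c g = [exists a, (a \in Defs.rel A (cons_sym c)) && (map g (Defs.cons_tuple c) == map Some a)].
Proof.
apply: eq_existsb => a; congr andb.
have -> : map g (Defs.cons_tuple c) = map_tuple g (Defs.cons_tuple c) by [].
have -> : map Some a = map_tuple Some a by [].
rewrite (inj_eq val_inj) eqEtuple; apply: eq_forallb => i.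
by rewrite !tnth_map.
Qed.

Lemma exists_tuple_of_dom n (x : n.-tuple X) (g : pfun X A) :
  dom g = [set y | y \in x] -> exists a : n.-tuple A, map g x = map Some a.
Proof.
move=> d.
have all_in : all (fun y => isSome (g y)) x.
  apply/allP => y yx; have : y \in dom g by rewrite d inE.
  by rewrite inE; case: (g y).
have sz : size (pmap g x) == n.
  by have := all_in; rewrite all_count size_pmap size_tuple.
exists (Tuple sz) => /=.
by rewrite pmapS_filter (all_filterP all_in).
Qed.

Lemma sum_ext n (x : n.-tuple X) (D : pred (n.-tuple A)) (P : pred (pfun X A))
  (F : pfun X A -> rat) :
  \sum_(g | [&& dom g == [set y | y \in x], P g &
             [exists a, D a && (map g x == map Some a)]]) F g
  = \sum_(a | [&& D a, consistent x a & P (ext x a)]) F (ext x a).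
Proof.
apply: sum_bij.
- move=> a b /and3P[_ ca _] /and3P[_ cb _] e; apply: val_inj; exact: ext_inj e.
- move=> a /and3P[Da ca Pa]; rewrite dom_ext // eqxx Pa /=.
  by apply/existsP; exists a; rewrite Da /=.
move=> g /and3P[/eqP d Pg /existsP[a /andP[Da /eqP e]]].
have [_ ca] := map_ext e.
by exists a; rewrite ?Da ?ca ?(ext_eq_dom e d).
Qed.

Lemma sum_ext_all n (x : n.-tuple X) (P : pred (pfun X A)) (F : pfun X A -> rat) :
  \sum_(g | (dom g == [set y | y \in x]) && P g) F g
  = \sum_(a : n.-tuple A | consistent x a && P (ext x a)) F (ext x a).
Proof.
rewrite -(sum_ext x predT); apply: eq_bigl => g.
case: (boolP (dom g == _)) => //= /eqP d; case: (P g) => //=.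
have [a e] := exists_tuple_of_dom (n := n) (x := x) (g := g) d.
by symmetry; apply/existsP; exists a; rewrite e eqxx.
Qed.

Lemma dom_pt u v : dom (pt u v) = [set u].
Proof. by apply/setP => z; rewrite !inE ffunE; case: (z == u). Qed.

Lemma restricts_pt (g : pfun X A) u v : restricts g (pt u v) = (g u == Some v).
Proof.
rewrite /restricts dom_pt; apply/forallP/idP => [/(_ u)|gu z].
  by rewrite inE eqxx ffunE eqxx.
by apply/implyP; rewrite inE ffunE => /eqP ->; rewrite eqxx.
Qed.

Lemma ext_restricts y b (g f : pfun X A) : map g y = map Some b ->
  dom f = [set z | z \in y] -> (ext y b == f) = restricts g f.
Proof.
move=> e d; have [h c] := map_ext e.
apply/eqP/forallP => [<- z|H].
  by apply/implyP; rewrite dom_ext // inE => zy; rewrite h.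
apply/ffunP => z; case: (boolP (z \in y)) => zy.
  by rewrite h //; have := H z; rewrite d inE zy => /eqP.
rewrite ext_out ?(consistent_size c) //.
case E: (f z) => [v|] //.
have : z \in dom f by rewrite inE E.
by rewrite d inE (negbTE zy).
Qed.

Lemma restricts_same (g f : pfun X A) : dom g = dom f -> restricts g f = (g == f).
Proof.
move=> d; apply/forallP/eqP => [H|->]; last by move=> z; apply/implyP.
apply/ffunP => z; case: (boolP (z \in dom f)) => zf.
  by have := H z; rewrite zf => /eqP.
have gz : g z = None by move: zf; rewrite -d inE negbK => /eqP.
have fz : f z = None by move: zf; rewrite inE negbK => /eqP.
by rewrite gz fz.
Qed.

Lemma ext_restr_ext n m (x : n.-tuple X) (a : n.-tuple A) (i : m.-tuple 'I_n)
   (b : m.-tuple A) :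
  consistent x a -> consistent (proj x i) b ->
  restricts (ext x a) (ext (proj x i) b) = (proj a i == b).
Proof.
move=> ca cb; have e := consistent_proj i ca.
rewrite -(ext_restricts e (dom_ext cb)).
have [_ c'] := map_ext e.
apply/eqP/eqP => [H|->] //; apply: val_inj; exact: ext_inj H.
Qed.

Lemma dom1_pt (f : pfun X A) u : dom f = [set u] -> exists v, f = pt u v.
Proof.
move=> d; have : u \in dom f by rewrite d inE.
rewrite inE; case E: (f u) => [v|] // _; exists v.
apply/ffunP => z; rewrite ffunE; case: eqP => [->//|ne].
case F: (f z) => [w|] //.
have : z \in dom f by rewrite inE F.
by rewrite d inE => /eqP.
Qed.

End Gen.

Lemma sum_sig (T : finType) (S : {set T}) (P : pred T) (F : T -> rat) :
  \sum_(d : {x : T | x \in S} | P (val d)) F (val d) = \sum_(a | (a \in S) && P a) F a.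
Proof.
symmetry; apply: (sum_bij (h := val)).
- by move=> a b _ _; apply: val_inj.
- by move=> d Pd; rewrite (valP d).
by move=> a /andP[Sa Pa]; exists (exist _ a Sa).
Qed.

Section StarU.
Variables (s : signature) (k : nat) (B : sstructure s).

Definition useq (u : star_univ k B) : seq B :=
  match u with inl (existT _ x) => val x | inr c => val (Defs.cons_tuple c) end.
Definition ukind (u : star_univ k B) : ('I_k + sym s)%type :=
  match u with inl (existT j _) => inl j | inr c => inr (tag c) end.

Lemma uinj u u' : ukind u = ukind u' -> useq u = useq u' -> u = u'.
Proof.
case: u => [[j x]|[R [t Ht]]]; case: u' => [[j' x']|[R' [t' Ht']]] //= [e] e'.
  by subst j'; congr (inl (existT _ j _)); apply: val_inj.
subst R'; congr (inr (existT _ R _)); apply: val_inj; exact: val_inj.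
Qed.

Lemma tup_inj (j : 'I_k) (a b : (j.+1).-tuple B) : tup a = tup b -> a = b.
Proof. by move/(congr1 useq) => /= e; apply: val_inj. Qed.

Lemma cst_inj R (a b : {t : (ar R).-tuple B | t \in Defs.rel B R}) : cst k a = cst k b -> a = b.
Proof. by move/(congr1 useq) => /= e; apply: val_inj; apply: val_inj. Qed.

Lemma ukind_tup (j : 'I_k) (a : (j.+1).-tuple B) : ukind (tup a) = inl j.
Proof. by []. Qed.
Lemma useq_tup (j : 'I_k) (a : (j.+1).-tuple B) : useq (tup a) = a.
Proof. by []. Qed.
Lemma ukind_cst R (a : {t : (ar R).-tuple B | t \in Defs.rel B R}) : ukind (cst k a) = inr R.
Proof. by []. Qed.
Lemma useq_cst R (a : {t : (ar R).-tuple B | t \in Defs.rel B R}) : useq (cst k a) = val a.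
Proof. by []. Qed.

Lemma sum_tup (j : 'I_k) (P : pred (star_univ k B)) (F : star_univ k B -> rat) :
  \sum_(v | (ukind v == inl j) && P v) F v = \sum_(a : (j.+1).-tuple B | P (tup a)) F (tup a).
Proof.
apply: sum_bij.
- by move=> a b _ _; apply: tup_inj.
- by move=> a Pa; rewrite ukind_tup eqxx.
case=> [[j' x]|c] //= /andP[/eqP [e] Pv]; subst j'.
by exists x.
Qed.

Lemma sum_cst R (P : pred (star_univ k B)) (F : star_univ k B -> rat) :
  \sum_(v | (ukind v == inr R) && P v) F v =
  \sum_(a : {t : (ar R).-tuple B | t \in Defs.rel B R} | P (cst k a)) F (cst k a).
Proof.
apply: sum_bij.
- by move=> a b _ _; apply: cst_inj.
- by move=> a Pa; rewrite ukind_cst eqxx.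
move=> v /andP[/eqP e Pv]; case: v e Pv => [[j x]|[R' t]] //= [e] Pv; subst R'.
by exists t.
Qed.

End StarU.

Definition good (s : signature) (X A : sstructure s) (k : nat)
  (W : star_univ k X -> star_univ k A -> rat) : Prop :=
  [/\ (forall u v, 0 <= W u v <= 1),
      (forall u, \sum_v W u v = 1),
      (forall u v, W u v != 0 -> (ukind v == ukind u) && consistent (useq u) (useq v)),
      (forall (j j' : 'I_k) (x : (j.+1).-tuple X) (i : (j'.+1).-tuple 'I_(j.+1))
          (b : (j'.+1).-tuple A),
          W (tup (proj x i)) (tup b) =
          \sum_(a : (j.+1).-tuple A | proj a i == b) W (tup x) (tup a))
    & (forall (R : sym s) (t : {t : (ar R).-tuple X | t \in Defs.rel X R}) (j : 'I_k)
          (i : (j.+1).-tuple 'I_(ar R)) (b : (j.+1).-tuple A),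
          W (tup (proj (val t) i)) (tup b) =
          \sum_(d : {t : (ar R).-tuple A | t \in Defs.rel A R} | proj (val d) i == b)
             W (cst k t) (cst k d))].

Lemma card_set_tuple (T : finType) n (x : n.-tuple T) :
  (0 < n)%N -> (1 <= #|[set y | y \in x]| <= n)%N.
Proof.
move=> n0; apply/andP; split.
  rewrite card_gt0; apply/set0Pn; exists (tnth x (Ordinal n0)).
  by rewrite inE mem_tnth.
by rewrite cardsE; have := card_size x; rewrite size_tuple.
Qed.

Section Fwd.
Variables (s : signature) (X A : sstructure s) (k : nat).
Hypothesis ar_pos : forall R : sym s, (0 < ar R)%N.
Hypothesis k_pos : (1 <= k)%N.
Variables (p : pfun X A -> rat) (q : cons_of X -> pfun X A -> rat).
Hypothesis pb : forall f, (1 <= #|dom f| <= k)%N -> 0 <= p f <= 1.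
Hypothesis qb : forall c f, dom f = cset c -> 0 <= q c f <= 1.
Hypothesis psum : forall V : {set X}, (1 <= #|V| <= k)%N -> \sum_(f | dom f == V) p f = 1.
Hypothesis pmarg : forall (U V : {set X}) (f : pfun X A),
  U \subset V -> (1 <= #|U|)%N -> (#|V| <= k)%N -> dom f = U ->
  p f = \sum_(g | (dom g == V) && restricts g f) p g.
Hypothesis pcons : forall c (U : {set X}) (f : pfun X A),
  U \subset cset c -> (1 <= #|U| <= k)%N -> dom f = U ->
  p f = \sum_(g | (dom g == cset c) && restricts g f) q c g.
Hypothesis punsat : forall c f, dom f = cset c -> ~~ sat c f -> q c f = 0.

Definition rr (u : star_univ k X) : pfun X A -> rat :=
  match u with inl _ => p | inr c => q c end.
Definition Wf (u : star_univ k X) (v : star_univ k A) : rat :=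
  if (ukind v == ukind u) && consistent (useq u) (useq v)
  then rr u (ext (useq u) (useq v)) else 0.

Lemma Wf_bounds u v : 0 <= Wf u v <= 1.
Proof.
rewrite /Wf; case: ifP => [/andP[_ cc]|_]; last by rewrite lexx ler01.
case: u cc => [[j x]|c] /= cc.
  apply: pb; rewrite dom_ext //.
  have /andP[h1 h2] := card_set_tuple x (ltn0Sn j).
  by rewrite h1 /= (leq_trans h2 (ltn_ord j)).
by apply: qb; apply: dom_ext cc.
Qed.

Lemma qsum1 c : \sum_(g | dom g == cset c) q c g = 1.
Proof.
set t := Defs.cons_tuple c.
pose y0 := tnth t (Ordinal (ar_pos (cons_sym c))).
rewrite -(psum (V := [set y0])); last by rewrite cards1.
rewrite [RHS](eq_bigr (fun f => \sum_(g | (dom g == cset c) && restricts g f) q c g)); last first.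
  move=> f /eqP df; apply: (pcons _ _ df); last by rewrite cards1.
  by rewrite sub1set inE mem_tnth.
rewrite (exchange_big_dep (fun g => dom g == cset c)) /=; last by move=> f g _ /andP[].
apply: eq_bigr => g /eqP dg.
have : y0 \in dom g by rewrite dg inE mem_tnth.
rewrite inE; case E: (g y0) => [v0|] // _.
rewrite (big_pred1 (pt y0 v0)) // => f /=.
rewrite dg eqxx /=; apply/andP/eqP => [[/eqP df rg]|->]; last first.
  by rewrite dom_pt restricts_pt E.
have [v fv] := dom1_pt df; move: rg; rewrite fv restricts_pt E => /eqP [->].
by [].
Qed.

Lemma drop_unsat c (P : pred (pfun X A)) :
  \sum_(g | (dom g == cset c) && P g) q c g =
  \sum_(g | [&& dom g == cset c, P g & sat c g]) q c g.
Proof.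
rewrite [RHS](eq_bigl (fun g => ((dom g == cset c) && P g) && sat c g)); last first.
  by move=> g; rewrite andbA.
rewrite [RHS]big_mkcondr; apply: eq_bigr => g /andP[/eqP d _].
by case: ifP => // /negbT ns; rewrite punsat.
Qed.

Lemma Wf_sum u : \sum_v Wf u v = 1.
Proof.
rewrite /Wf -big_mkcond /=.
case: u => [[j x]|[R [t Ht]]] /=.
  rewrite (sum_tup j (fun v => consistent (val x) (useq v))) /=.
  rewrite -(psum (V := [set y | y \in x])); last first.
    have /andP[h1 h2] := card_set_tuple x (ltn0Sn j).
    by rewrite h1 /= (leq_trans h2 (ltn_ord j)).
  rewrite (eq_bigl (fun a : (j.+1).-tuple A => consistent x a && predT (ext x a))); last first.
    by move=> a /=; rewrite andbT.
  rewrite -(sum_ext_all x predT p).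
  by apply: eq_bigl => g; rewrite andbT.
rewrite (sum_cst R (fun v => consistent t (useq v))) /=.
rewrite (@sum_sig _ (Defs.rel A R) (fun a => consistent t a) (fun a => q (existT _ R (exist _ t Ht)) (ext t a))) /=.
rewrite (eq_bigl (fun a : (ar R).-tuple A =>
   [&& a \in Defs.rel A R, consistent t a & predT (ext t a)])); last first.
  by move=> a; rewrite /= andbT.
rewrite -(sum_ext t (fun a => a \in Defs.rel A R) predT) /=.
rewrite -(qsum1 (existT _ R (exist _ t Ht))).
rewrite [RHS](eq_bigl (fun g => (dom g == cset (existT _ R (exist _ t Ht))) && predT g)); last first.
  by move=> g; rewrite andbT.
rewrite (drop_unsat _ predT).
apply: eq_bigl => g; rewrite sat_map /=.
by [].
Qed.

Lemma mem_proj n m (x : n.-tuple X) (i : m.-tuple 'I_n) y :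
  y \in (proj x i : seq X) -> y \in (x : seq X).
Proof. by rewrite /proj /= => /mapP[z _ ->]; apply: mem_tnth. Qed.

Lemma consistent_proj' n m (x : n.-tuple X) (a : n.-tuple A) (i : m.-tuple 'I_n) :
  consistent x a -> consistent (proj x i) (proj a i).
Proof. by move=> c; have [] := map_ext (consistent_proj i c). Qed.

Lemma Wf_T (j j' : 'I_k) (x : (j.+1).-tuple X) (i : (j'.+1).-tuple 'I_(j.+1))
  (b : (j'.+1).-tuple A) :
  Wf (tup (proj x i)) (tup b) = \sum_(a : (j.+1).-tuple A | proj a i == b) Wf (tup x) (tup a).
Proof.
rewrite /Wf /= !eqxx /=.
case: (boolP (consistent (proj x i) b)) => cb; last first.
  apply/esym/big1 => a /eqP pa; case: ifP => // ca.
  by move: cb; rewrite -pa consistent_proj'.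
rewrite (pmarg (U := [set y | y \in (proj x i : seq X)]) (V := [set y | y \in (x : seq X)])) ?dom_ext //.
- rewrite (sum_ext_all x (fun g => restricts g (ext (proj x i) b)) p).
  rewrite -big_mkcondr /=; apply: eq_bigl => a.
  case: (boolP (consistent x a)) => ca; last by rewrite andbF.
  by rewrite ext_restr_ext // andbT.
- by apply/subsetP => y; rewrite !inE; apply: mem_proj.
- by have /andP[] := card_set_tuple (proj x i) (ltn0Sn j').
- have /andP[_ h2] := card_set_tuple x (ltn0Sn j).
  exact: leq_trans h2 (ltn_ord j).
Qed.

Lemma Wf_R (R : sym s) (t : {t : (ar R).-tuple X | t \in Defs.rel X R}) (j : 'I_k)
  (i : (j.+1).-tuple 'I_(ar R)) (b : (j.+1).-tuple A) :
  Wf (tup (proj (val t) i)) (tup b) =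
  \sum_(d : {t : (ar R).-tuple A | t \in Defs.rel A R} | proj (val d) i == b)
     Wf (cst k t) (cst k d).
Proof.
rewrite /Wf /= !eqxx /=.
case: (boolP (consistent (proj (val t) i) b)) => cb; last first.
  apply/esym/big1 => a /eqP pa; case: ifP => // ca.
  by move: cb; rewrite -pa consistent_proj'.
pose c : cons_of X := existT _ R t.
rewrite (pcons (c := c) (U := [set y | y \in (proj (val t) i : seq X)])) ?dom_ext //.
- rewrite drop_unsat.
  rewrite (eq_bigl (fun g => [&& dom g == [set y | y \in (val t : seq X)],
      restricts g (ext (proj (val t) i) b) &
      [exists a, (a \in Defs.rel A R) && (map g (val t) == map Some a)]])); last first.
    by move=> g; rewrite sat_map.
  rewrite (sum_ext (val t) (fun a => a \in Defs.rel A R)).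
  rewrite -big_mkcondr /=.
  rewrite (@sum_sig _ (Defs.rel A R) (fun a => (proj a i == b) && consistent (val t) a)
     (fun a => q c (ext (val t) a))).
  apply: eq_bigl => a.
  case: (boolP (consistent (val t) a)) => ca; last by rewrite !andbF.
  by rewrite ext_restr_ext // andbT.
- apply/subsetP => y; rewrite !inE; apply: mem_proj.
- have /andP[h1 h2] := card_set_tuple (proj (val t) i) (ltn0Sn j).
  by rewrite h1 (leq_trans h2 (ltn_ord j)).
Qed.

Lemma fwd_good : good Wf.
Proof.
split.
- exact: Wf_bounds.
- exact: Wf_sum.
- by move=> u v; rewrite /Wf; case: ifP => //; rewrite eqxx.
- exact: Wf_T.
- exact: Wf_R.
Qed.
End Fwd.

Lemma cons_sum (s : signature) (B C : sstructure s) (Q : cons_of B -> pfun B C -> rat)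
  (punsat : forall c f, dom f = cset c -> ~~ sat c f -> Q c f = 0)
  (c : cons_of B) (m : 'I_(ar (cons_sym c))) v :
  \sum_(g | (dom g == cset c) && restricts g (pt (tnth (Defs.cons_tuple c) m) v)) Q c g =
  \sum_(t' | [&& t' \in Defs.rel C (cons_sym c), consistent (Defs.cons_tuple c) t'
              & tnth t' m == v]) Q c (ext (Defs.cons_tuple c) t').
Proof.
set t := Defs.cons_tuple c.
transitivity (\sum_(g | [&& dom g == [set y | y \in (t : seq B)],
     restricts g (pt (tnth t m) v) &
     [exists a, (a \in Defs.rel C (cons_sym c)) && (map g t == map Some a)]]) Q c g).
  rewrite [RHS](eq_bigl (fun g => ((dom g == cset c) && restricts g (pt (tnth t m) v)) && sat c g)); last first.
    by move=> g; rewrite sat_map andbA.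
  rewrite [RHS]big_mkcondr; apply: eq_bigr => g /andP[/eqP d _].
  by case: ifP => // /negbT ns; rewrite punsat.
rewrite sum_ext; apply: eq_bigl => t'.
case: (boolP (consistent t t')) => ct; last by rewrite andbF.
by rewrite restricts_pt ext_tnth.
Qed.

Section SA1.
Variables (s : signature) (B C : sstructure s).
Variables (P : pfun B C -> rat) (Q : cons_of B -> pfun B C -> rat).
Hypothesis pb1 : forall f, (1 <= #|dom f| <= 1)%N -> 0 <= P f <= 1.
Hypothesis psum1 : forall V : {set B}, (1 <= #|V| <= 1)%N -> \sum_(f | dom f == V) P f = 1.
Hypothesis pcons1 : forall c (U : {set B}) (f : pfun B C),
  U \subset cset c -> (1 <= #|U| <= 1)%N -> dom f = U ->
  P f = \sum_(g | (dom g == cset c) && restricts g f) Q c g.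
Hypothesis punsat1 : forall c f, dom f = cset c -> ~~ sat c f -> Q c f = 0.

Lemma SA1_bounds u v : 0 <= P (pt u v) <= 1.
Proof. by apply: pb1; rewrite dom_pt cards1. Qed.

Lemma SA1_sum u : \sum_v P (pt u v) = 1.
Proof.
rewrite -(psum1 (V := [set u])) ?cards1 //; symmetry.
apply: (sum_bij (h := pt u)) => //.
- by move=> a b _ _ /(congr1 (fun f : pfun B C => f u)); rewrite !ffunE eqxx => -[].
- by move=> v _; rewrite dom_pt.
by move=> f /eqP /dom1_pt [v ->]; exists v.
Qed.

Lemma SA1_cons c (m : 'I_(ar (cons_sym c))) v :
  P (pt (tnth (Defs.cons_tuple c) m) v) =
  \sum_(t' | [&& t' \in Defs.rel C (cons_sym c), consistent (Defs.cons_tuple c) t'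
              & tnth t' m == v]) Q c (ext (Defs.cons_tuple c) t').
Proof.
set t := Defs.cons_tuple c.
rewrite (pcons1 (c := c) (U := [set tnth t m])) ?dom_pt ?cards1 //; last first.
  by rewrite sub1set inE mem_tnth.
transitivity (\sum_(g | [&& dom g == [set y | y \in (t : seq B)],
     restricts g (pt (tnth t m) v) &
     [exists a, (a \in Defs.rel C (cons_sym c)) && (map g t == map Some a)]]) Q c g).
  rewrite [RHS](eq_bigl (fun g => ((dom g == cset c) && restricts g (pt (tnth t m) v)) && sat c g)); last first.
    by move=> g; rewrite sat_map andbA.
  rewrite [RHS]big_mkcondr; apply: eq_bigr => g /andP[/eqP d _].
  by case: ifP => // /negbT ns; rewrite punsat1.
rewrite sum_ext; apply: eq_bigl => t'.
case: (boolP (consistent t t')) => ct; last by rewrite andbF.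
by rewrite restricts_pt ext_tnth.
Qed.

Lemma SA1_nz c (m : 'I_(ar (cons_sym c))) v :
  P (pt (tnth (Defs.cons_tuple c) m) v) != 0 ->
  exists t', [&& t' \in Defs.rel C (cons_sym c), consistent (Defs.cons_tuple c) t'
              & tnth t' m == v].
Proof.
rewrite SA1_cons => nz; apply/existsP; apply: contraNT nz => /existsPn H.
by apply/eqP/big1 => t' Ht'; move: (H t'); rewrite Ht'.
Qed.

Lemma SA1_bin c (J : finType) (h : J -> (ar (cons_sym c)).-tuple C)
  (m0 m1 : 'I_(ar (cons_sym c))) v :
  (forall a, h a \in Defs.rel C (cons_sym c)) ->
  (forall t', t' \in Defs.rel C (cons_sym c) -> exists a, t' = h a) ->
  injective (fun a => tnth (h a) m0) ->
  P (pt (tnth (Defs.cons_tuple c) m1) v) =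
  \sum_(a | tnth (h a) m1 == v) P (pt (tnth (Defs.cons_tuple c) m0) (tnth (h a) m0)).
Proof.
move=> hin hsurj hinj; set t := Defs.cons_tuple c.
have hinj' : injective h by move=> a b e; apply: hinj => /=; rewrite e.
rewrite SA1_cons.
rewrite (sum_bij (h := h) (Q := fun a => consistent t (h a) && (tnth (h a) m1 == v))); last first.
- by move=> t' /and3P[/hsurj [a ->] ca va]; exists a; rewrite ?ca.
- by move=> a /andP[ca va]; rewrite hin ca.
- by move=> a b _ _; apply: hinj'.
rewrite [RHS](eq_bigr (fun a => if consistent t (h a) then Q c (ext t (h a)) else 0)); last first.
  move=> a _; rewrite SA1_cons.
  rewrite (sum_bij (h := h) (Q := fun b => consistent t (h b) && (tnth (h b) m0 == tnth (h a) m0))); last first.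
  - by move=> t' /and3P[/hsurj [b ->] cb vb]; exists b; rewrite ?cb.
  - by move=> b /andP[cb vb]; rewrite hin cb.
  - by move=> b b' _ _; apply: hinj'.
  rewrite (eq_bigl (fun b => (b == a) && consistent t (h b))); last first.
    by move=> b /=; rewrite andbC; congr andb; apply/eqP/eqP => [/hinj|->].
  by rewrite big_mkcondr big_pred1_eq.
by rewrite -big_mkcondr; apply: eq_bigl => a; rewrite andbC.
Qed.
End SA1.

Definition pattern (T : eqType) n (x : n.-tuple T) (S : {set 'I_n}) : bool :=
  [forall i in S, forall i' in S, tnth x i == tnth x i'].

Section Star1.
Variables (s : signature) (X A : sstructure s) (k : nat).

Lemma memT1 (B : sstructure s) (j : 'I_k) (S : {set 'I_j.+1}) (x : (j.+1).-tuple B) :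
  pattern x S ->
  [tuple tup x] \in star_rel B (inl (inl (inl (existT _ j S))) : star_sym s k).
Proof. by move=> px; apply/imsetP; exists x; rewrite ?inE. Qed.

Lemma memR1 (B : sstructure s) (R : sym s) (S : {set 'I_(ar R)})
  (t : {t : (ar R).-tuple B | t \in Defs.rel B R}) :
  pattern (val t) S ->
  [tuple cst k t] \in star_rel B (inl (inr (existT _ R S)) : star_sym s k).
Proof. by move=> px; apply/imsetP; exists t; rewrite ?inE. Qed.

Lemma memT2 (B : sstructure s) (j j' : 'I_k) (i : (j'.+1).-tuple 'I_(j.+1)) (x : (j.+1).-tuple B) :
  [tuple tup x; tup (proj x i)] \in star_rel B (inl (inl (inr (existT _ (j, j') i))) : star_sym s k).
Proof. by apply/imsetP; exists x. Qed.

Lemma memR2 (B : sstructure s) (R : sym s) (j : 'I_k) (i : (j.+1).-tuple 'I_(ar R))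
  (t : {t : (ar R).-tuple B | t \in Defs.rel B R}) :
  [tuple cst k t; tup (proj (val t) i)] \in star_rel B (inr (existT _ (R, j) i) : star_sym s k).
Proof. by apply/imsetP; exists t. Qed.

Definition cT1 (j : 'I_k) (S : {set 'I_j.+1}) (x : (j.+1).-tuple X) (H : pattern x S) :
  cons_of (star k X) := existT _ (inl (inl (inl (existT _ j S))) : star_sym s k)
     (exist _ [tuple tup x] (memT1 H)).
Definition cR1 (R : sym s) (S : {set 'I_(ar R)}) (t : {t : (ar R).-tuple X | t \in Defs.rel X R})
  (H : pattern (val t) S) : cons_of (star k X) :=
  existT _ (inl (inr (existT _ R S)) : star_sym s k) (exist _ [tuple cst k t] (memR1 H)).
Definition cT2 (j j' : 'I_k) (i : (j'.+1).-tuple 'I_(j.+1)) (x : (j.+1).-tuple X) :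
  cons_of (star k X) := existT _ (inl (inl (inr (existT _ (j, j') i))) : star_sym s k)
     (exist _ [tuple tup x; tup (proj x i)] (memT2 i x)).
Definition cR2 (R : sym s) (j : 'I_k) (i : (j.+1).-tuple 'I_(ar R))
  (t : {t : (ar R).-tuple X | t \in Defs.rel X R}) : cons_of (star k X) :=
  existT _ (inr (existT _ (R, j) i) : star_sym s k)
     (exist _ [tuple cst k t; tup (proj (val t) i)] (memR2 i t)).

Section Cdir.
Variables (P : pfun (star k X) (star k A) -> rat) (Q : cons_of (star k X) -> pfun (star k X) (star k A) -> rat).
Hypothesis pb1 : forall f, (1 <= #|dom f| <= 1)%N -> 0 <= P f <= 1.
Hypothesis psum1 : forall V : {set star k X}, (1 <= #|V| <= 1)%N -> \sum_(f | dom f == V) P f = 1.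
Hypothesis pcons1 : forall c (U : {set star k X}) (f : pfun (star k X) (star k A)),
  U \subset cset c -> (1 <= #|U| <= 1)%N -> dom f = U ->
  P f = \sum_(g | (dom g == cset c) && restricts g f) Q c g.
Hypothesis punsat1 : forall c f, dom f = cset c -> ~~ sat c f -> Q c f = 0.

Definition WP (u : star_univ k X) (v : star_univ k A) : rat := P (@pt _ (star k X) (star k A) u v).

Lemma WP_T1 (j : 'I_k) (S : {set 'I_j.+1}) (x : (j.+1).-tuple X) v :
  pattern x S -> WP (tup x) v != 0 -> exists2 a : (j.+1).-tuple A, pattern a S & v = tup a.
Proof.
move=> H nz.
have := @SA1_nz _ _ _ P Q pcons1 punsat1 (cT1 H) ord0 v nz.
case=> t' /and3P[/imsetP[a]]; rewrite inE => pa -> _ /eqP <-.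
by exists a.
Qed.

Lemma WP_R1 (R : sym s) (S : {set 'I_(ar R)}) (t : {t : (ar R).-tuple X | t \in Defs.rel X R}) v :
  pattern (val t) S -> WP (cst k t) v != 0 ->
  exists2 d : {t : (ar R).-tuple A | t \in Defs.rel A R}, pattern (val d) S & v = cst k d.
Proof.
move=> H nz.
have := @SA1_nz _ _ _ P Q pcons1 punsat1 (cR1 H) ord0 v nz.
case=> t' /and3P[/imsetP[d]]; rewrite inE => pd -> _ /eqP <-.
by exists d.
Qed.

Lemma pattern0 (T : eqType) n (x : n.-tuple T) : pattern x set0.
Proof. by apply/forallP => i; rewrite inE. Qed.

Lemma pattern2 (T : eqType) n (x : n.-tuple T) i i' :
  tnth x i = tnth x i' -> pattern x [set i; i'].
Proof.
move=> e; apply/forallP => m; apply/implyP; rewrite !inE => /orP[] /eqP ->;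
  apply/forallP => m'; apply/implyP; rewrite !inE => /orP[] /eqP ->;
  by rewrite ?e eqxx.
Qed.

Lemma pattern2E (T : eqType) n (x : n.-tuple T) i i' :
  pattern x [set i; i'] -> tnth x i = tnth x i'.
Proof.
move=> /forallP /(_ i) /implyP; rewrite !inE eqxx => /(_ isT) /forallP /(_ i') /implyP.
by rewrite !inE eqxx orbT => /(_ isT) /eqP.
Qed.

Lemma WP_supp u v : WP u v != 0 -> (ukind v == ukind u) && consistent (useq u) (useq v).
Proof.
case: u => [[j x]|[R t]] nz.
  have [a _ ev] := WP_T1 (pattern0 x) nz.
  rewrite ev /= eqxx /=; apply: consistent_pairwise => i i' e.
  have [a' pa' e'] := WP_T1 (pattern2 e) nz.
  by rewrite (tup_inj (etrans (esym ev) e')); apply: pattern2E.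
have [d _ ev] := WP_R1 (t := t) (pattern0 (val t)) nz.
rewrite ev /= eqxx /=; apply: consistent_pairwise => i i' e.
have [d' pd' e'] := WP_R1 (t := t) (pattern2 e) nz.
by rewrite (cst_inj (etrans (esym ev) e')); apply: pattern2E.
Qed.

Lemma WP_T2 (j j' : 'I_k) (x : (j.+1).-tuple X) (i : (j'.+1).-tuple 'I_(j.+1))
  (b : (j'.+1).-tuple A) :
  WP (tup (proj x i)) (tup b) = \sum_(a : (j.+1).-tuple A | proj a i == b) WP (tup x) (tup a).
Proof.
pose h (a : (j.+1).-tuple A) : (ar (cons_sym (cT2 i x))).-tuple (star k A) :=
  [tuple tup a; tup (proj a i)].
have H1 : forall a, h a \in Defs.rel (star k A) (cons_sym (cT2 i x)).
  by move=> a; apply/imsetP; exists a.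
have H2 : forall t', t' \in Defs.rel (star k A) (cons_sym (cT2 i x)) -> exists a, t' = h a.
  by move=> t' /imsetP[a _ ->]; exists a.
have H3 : injective (fun a => tnth (h a) ord0) by move=> a a' /= /tup_inj.
have E := @SA1_bin _ _ _ P Q pcons1 punsat1 (cT2 i x) _ h ord0 ord_max (tup b) H1 H2 H3.
rewrite /WP; apply: etrans E _.
by apply: eq_bigl => a; apply/eqP/eqP => [/tup_inj|<-].
Qed.

Lemma WP_R2 (R : sym s) (t : {t : (ar R).-tuple X | t \in Defs.rel X R}) (j : 'I_k)
          (i : (j.+1).-tuple 'I_(ar R)) (b : (j.+1).-tuple A) :
  WP (tup (proj (val t) i)) (tup b) =
  \sum_(d : {t : (ar R).-tuple A | t \in Defs.rel A R} | proj (val d) i == b)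
     WP (cst k t) (cst k d).
Proof.
pose h (d : {t : (ar R).-tuple A | t \in Defs.rel A R}) :
  (ar (cons_sym (cR2 i t))).-tuple (star k A) := [tuple cst k d; tup (proj (val d) i)].
have H1 : forall a, h a \in Defs.rel (star k A) (cons_sym (cR2 i t)).
  by move=> a; apply/imsetP; exists a.
have H2 : forall t', t' \in Defs.rel (star k A) (cons_sym (cR2 i t)) -> exists a, t' = h a.
  by move=> t' /imsetP[a _ ->]; exists a.
have H3 : injective (fun a => tnth (h a) ord0) by move=> a a' /= /cst_inj.
have E := @SA1_bin _ _ _ P Q pcons1 punsat1 (cR2 i t) _ h ord0 ord_max (tup b) H1 H2 H3.
rewrite /WP; apply: etrans E _.
by apply: eq_bigl => a; apply/eqP/eqP => [/tup_inj|<-].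
Qed.

Lemma sa1_good : good WP.
Proof.
split.
- by move=> u v; apply: (SA1_bounds pb1).
- by move=> u; apply: (SA1_sum psum1).
- exact: WP_supp.
- exact: WP_T2.
- exact: WP_R2.
Qed.
End Cdir.
End Star1.

Lemma eq_bigl_supp (I : finType) (P1 P2 : pred I) (F : I -> rat) :
  (forall a, F a != 0 -> P1 a = P2 a) ->
  \sum_(a | P1 a) F a = \sum_(a | P2 a) F a.
Proof.
move=> h; rewrite big_mkcond [RHS]big_mkcond; apply: eq_bigr => a _.
case: (eqVneq (F a) 0) => [->|/h ->]; first by case: ifP; case: ifP.
by [].
Qed.

Lemma proj_exists (s : signature) (X : sstructure s) n m (x : n.-tuple X)
  (y : m.-tuple X) (o : 'I_n) :
  {subset y <= x} -> exists i : m.-tuple 'I_n, proj x i = y.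
Proof.
move=> sub; exists (map_tuple (fun z => insubd o (index z x)) y).
apply: val_inj; rewrite /proj /= -map_comp -[RHS]map_id; apply/eq_in_map => z zy /=.
have zx := sub z zy.
have lt : (index z x < n)%N by have := index_mem z x; rewrite size_tuple zx.
rewrite (tnth_nth z) val_insubd lt nth_index //.
Qed.

Section Bwd.
Variables (s : signature) (X A : sstructure s) (k : nat).
Hypothesis ar_pos : forall R : sym s, (0 < ar R)%N.
Hypothesis k_pos : (1 <= k)%N.
Variable W : star_univ k X -> star_univ k A -> rat.
Hypothesis W1 : forall u v, 0 <= W u v <= 1.
Hypothesis W2 : forall u, \sum_v W u v = 1.
Hypothesis W3 : forall u v, W u v != 0 -> (ukind v == ukind u) && consistent (useq u) (useq v).
Hypothesis W4 : forall (j j' : 'I_k) (x : (j.+1).-tuple X) (i : (j'.+1).-tuple 'I_(j.+1))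
          (b : (j'.+1).-tuple A),
          W (tup (proj x i)) (tup b) =
          \sum_(a : (j.+1).-tuple A | proj a i == b) W (tup x) (tup a).
Hypothesis W5 : forall (R : sym s) (t : {t : (ar R).-tuple X | t \in Defs.rel X R}) (j : 'I_k)
          (i : (j.+1).-tuple 'I_(ar R)) (b : (j.+1).-tuple A),
          W (tup (proj (val t) i)) (tup b) =
          \sum_(d : {t : (ar R).-tuple A | t \in Defs.rel A R} | proj (val d) i == b)
             W (cst k t) (cst k d).

Definition Lift (u : star_univ k X) (f : pfun X A) : rat :=
  \sum_(v | [&& ukind v == ukind u, consistent (useq u) (useq v) & ext (useq u) (useq v) == f])
    W u v.
Definition istup (u : star_univ k X) : bool := if u is inl _ then true else false.
Definition pB (f : pfun X A) : rat :=
  \sum_(u | istup u && (useq u == enum (dom f))) Lift u f.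
Definition qB (c : cons_of X) (f : pfun X A) : rat := Lift (cst k (tagged c)) f.

Lemma W_supp u (P1 P2 : pred (star_univ k A)) :
  (forall v, (ukind v == ukind u) && consistent (useq u) (useq v) -> P1 v = P2 v) ->
  \sum_(v | P1 v) W u v = \sum_(v | P2 v) W u v.
Proof. by move=> h; apply: eq_bigl_supp => v /W3 /h. Qed.

Lemma Lift_eq u f : Lift u f = \sum_(v | ext (useq u) (useq v) == f) W u v.
Proof. by apply: W_supp => v /andP[-> ->]. Qed.

Lemma LiftSum u (Pf : pred (pfun X A)) :
  \sum_(f | Pf f) Lift u f = \sum_(v | Pf (ext (useq u) (useq v))) W u v.
Proof.
under eq_bigr do rewrite Lift_eq.
rewrite (exchange_big_dep (fun v => Pf (ext (useq u) (useq v)))) /=; last first.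
  by move=> f v Pf' /eqP ->.
apply: eq_bigr => v Pv; rewrite (big_pred1 (ext (useq u) (useq v))) //.
by move=> f /=; apply/andP/eqP => [[_ /eqP <-]|->].

Qed.

Lemma Lift_bounds u f : 0 <= Lift u f <= 1.
Proof.
apply/andP; split; first by apply: sumr_ge0 => v _; case/andP: (W1 u v).
rewrite -(W2 u) [leRHS]big_mkcond /= [leLHS]big_mkcond /=; apply: ler_sum => v _.
by case: ifP => _; case/andP: (W1 u v).
Qed.

Lemma sum_full u (P : pred (star_univ k A)) :
  (forall v, (ukind v == ukind u) && consistent (useq u) (useq v) -> P v) ->
  \sum_(v | P v) W u v = 1.
Proof.
move=> h; rewrite -(W2 u); apply: W_supp => v /h ->.
by [].
Qed.

Lemma tupV (V : {set X}) : (1 <= #|V| <= k)%N ->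
  exists (j : 'I_k) (x : (j.+1).-tuple X), val x = enum V /\
   forall u, (istup u && (useq u == enum V)) = (u == tup x).
Proof.
move=> /andP[V1 Vk].
have lt : (#|V|.-1 < k)%N by rewrite prednK.
pose j := Ordinal lt.
have sz : size (enum V) == j.+1 by rewrite /= prednK // -cardE.
exists j, (Tuple sz); split => // u.
apply/andP/eqP => [[tu /eqP e]|->]; last by [].
case: u tu e => [[j' x']|//] _ /= e; apply: uinj => //=.
congr inl; apply: val_inj => /=.
have := congr1 size e; rewrite size_tuple -cardE => h.
by rewrite -h.
Qed.

Lemma pB_eq (f : pfun X A) (j : 'I_k) (x : (j.+1).-tuple X) :
  val x = enum (dom f) -> pB f = Lift (tup x) f.
Proof.
move=> e; rewrite /pB (big_pred1 (tup x)) // => u /=.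
apply/andP/eqP => [[tu /eqP e']|->]; last by rewrite /= e.
case: u tu e' => [[j' x']|//] _ /= e'; apply: uinj => //=.
  congr inl; apply: val_inj => /=.
  by apply: succn_inj; rewrite -(size_tuple x) -(size_tuple x') e e'.
by rewrite e.
Qed.


Lemma Lift_tup (j : 'I_k) (x : (j.+1).-tuple X) f :
  Lift (tup x) f = \sum_(b : (j.+1).-tuple A | ext x b == f) W (tup x) (tup b).
Proof.
rewrite Lift_eq.
rewrite (W_supp (P2 := fun v => (ukind v == inl j) && (ext x (useq v) == f))); last first.
  by move=> v /andP[/eqP -> _] /=; rewrite eqxx.
by rewrite sum_tup.
Qed.

Lemma Lift_cst (R : sym s) (t : {t : (ar R).-tuple X | t \in Defs.rel X R}) (P : pred (star_univ k A)) :
  \sum_(v | P v) W (cst k t) v =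
  \sum_(d : {t : (ar R).-tuple A | t \in Defs.rel A R} | P (cst k d)) W (cst k t) (cst k d).
Proof.
rewrite (W_supp (P2 := fun v => (ukind v == inr R) && P v)); last first.
  by move=> v /andP[/eqP -> _] /=; rewrite eqxx.
by rewrite sum_cst.
Qed.

Lemma pB_bounds f : (1 <= #|dom f| <= k)%N -> 0 <= pB f <= 1.
Proof.
move=> H; have [j [x [e _]]] := tupV H.
by rewrite (pB_eq e) Lift_bounds.
Qed.

Lemma set_tupV (j : 'I_k) (x : (j.+1).-tuple X) (V : {set X}) :
  val x = enum V -> [set y | y \in (x : seq X)] = V.
Proof. by move=> e; rewrite e set_enum. Qed.

Lemma pB_sum (V : {set X}) : (1 <= #|V| <= k)%N -> \sum_(f | dom f == V) pB f = 1.
Proof.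
move=> HV; have [j [x [e _]]] := tupV HV.
rewrite (eq_bigr (fun f => Lift (tup x) f)); last first.
  by move=> f /eqP df; apply: pB_eq; rewrite df.
rewrite (LiftSum _ (fun f => dom f == V)).
apply: sum_full => v /andP[_ cv] /=.
by rewrite dom_ext // (set_tupV e).
Qed.

Lemma pB_marg (U V : {set X}) (f : pfun X A) :
  U \subset V -> (1 <= #|U|)%N -> (#|V| <= k)%N -> dom f = U ->
  pB f = \sum_(g | (dom g == V) && restricts g f) pB g.
Proof.
move=> sUV U1 Vk df.
have UV := subset_leq_card sUV.
have [jU [y [ey _]]] := tupV (V := U) (introT andP (conj U1 (leq_trans UV Vk))).
have [jV [x [ex _]]] := tupV (V := V) (introT andP (conj (leq_trans U1 UV) Vk)).
rewrite (pB_eq (x := y)); last by rewrite df.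
rewrite (eq_bigr (fun g => Lift (tup x) g)); last first.
  by move=> g /andP[/eqP dg _]; apply: pB_eq; rewrite dg.
rewrite (LiftSum _ (fun g => (dom g == V) && restricts g f)) /=.
have [i pi] : exists i : (jU.+1).-tuple 'I_(jV.+1), proj x i = y.
  apply: (@proj_exists _ _ _ _ x y ord0) => z zy.
  have : z \in enum U by rewrite -ey.
  by rewrite mem_enum => /(subsetP sUV); rewrite -mem_enum -ex.
rewrite -pi Lift_tup.
rewrite (eq_bigr (fun b => \sum_(a | proj a i == b) W (tup x) (tup a))); last first.
  move=> b _; exact: W4.
transitivity (\sum_(a : (jV.+1).-tuple A | ext (proj x i) (proj a i) == f) W (tup x) (tup a)).
  rewrite [RHS](partition_big (fun a => proj a i) (fun b => ext (proj x i) b == f)) //.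
  apply: eq_bigr => b eb; apply: eq_bigl => a.
  by case: (eqVneq (proj a i) b) => [->|]; rewrite ?eb ?eqxx ?andbF ?andbT.
rewrite (W_supp (P2 := fun v => (ukind v == inl jV) &&
   ((dom (ext x (useq v)) == V) && restricts (ext x (useq v)) f))); last first.
  by move=> v /andP[/eqP -> _] /=; rewrite eqxx.
rewrite sum_tup /=; apply: eq_bigl_supp => a /W3 /= /andP[_ ca].
rewrite dom_ext // (set_tupV ex) eqxx /=.
apply: ext_restricts; first exact: consistent_proj.
by rewrite df -(set_tupV ey) -pi.
Qed.

Lemma pB_cons c (U : {set X}) (f : pfun X A) :
  U \subset cset c -> (1 <= #|U| <= k)%N -> dom f = U ->
  pB f = \sum_(g | (dom g == cset c) && restricts g f) qB c g.
Proof.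
case: c => R t sU HU df; rewrite /qB /=.
have [jU [y [ey _]]] := tupV HU.
rewrite (pB_eq (x := y)); last by rewrite df.
rewrite (LiftSum _ (fun g => (dom g == cset (existT _ R t)) && restricts g f)) /=.
have [i pi] : exists i : (jU.+1).-tuple 'I_(ar R), proj (val t) i = y.
  apply: (@proj_exists _ _ _ _ (val t) y (Ordinal (ar_pos R))).
  move=> z zy; have : z \in enum U by rewrite -ey.
  by rewrite mem_enum => /(subsetP sU); rewrite inE.
rewrite -pi Lift_tup.
rewrite (eq_bigr (fun b => \sum_(d : {t : (ar R).-tuple A | t \in Defs.rel A R} | proj (val d) i == b) W (cst k t) (cst k d))); last first.
  move=> b _; exact: W5.
transitivity (\sum_(d : {t : (ar R).-tuple A | t \in Defs.rel A R} |
     ext (proj (val t) i) (proj (val d) i) == f) W (cst k t) (cst k d)).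
  rewrite [RHS](partition_big (fun d => proj (val d) i) (fun b => ext (proj (val t) i) b == f)) //.
  apply: eq_bigr => b eb; apply: eq_bigl => a.
  by case: (eqVneq (proj (val a) i) b) => [->|]; rewrite ?eb ?eqxx ?andbF ?andbT.
rewrite Lift_cst /=; apply: eq_bigl_supp => d /W3 /= /andP[_ cd].
rewrite dom_ext // eqxx /=.
apply: ext_restricts; first exact: consistent_proj.
by rewrite df -(set_tupV ey) -pi.
Qed.

Lemma qB_unsat c f : dom f = cset c -> ~~ sat c f -> qB c f = 0.
Proof.
case: c => R t df ns; rewrite /qB /Lift /=.
apply: big1 => v /and3P[/eqP kv cv /eqP ev].
case: v kv cv ev => [[j x]|[R' [d Hd]]] //= [e]; subst R' => cv ev.
case/negP: ns; rewrite sat_map; apply/existsP; exists d; rewrite Hd /=.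
by rewrite -ev; exact: cv.
Qed.

Lemma bwd_feasible : SA_feasible X A k.
Proof.
exists pB, qB; split.
- split=> [f|c f _]; [exact: pB_bounds | exact: Lift_bounds].
- exact: pB_sum.
- exact: pB_marg.
- exact: pB_cons.
- exact: qB_unsat.
Qed.

End Bwd.

Lemma sum_inj_eq (J I : finType) (h : J -> I) (D : pred J) (F : I -> rat) v :
  injective h -> (F v != 0 -> exists2 a, D a & v = h a) ->
  \sum_(a | D a && (h a == v)) F (h a) = F v.
Proof.
move=> hinj H; case: (eqVneq (F v) 0) => [Fv0|nz].
  by rewrite Fv0; apply: big1 => a /andP[_ /eqP ->].
have [a0 Da0 ->] := H nz.
rewrite (big_pred1 a0) // => a /=.
by rewrite (inj_eq hinj); case: eqP => [->|]; rewrite ?Da0 ?andbF.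
Qed.

Lemma pick_ord0 n : [pick m : 'I_n.+1 | val m == 0%N] = Some ord0.
Proof.
case: pickP => [m /eqP e|/(_ ord0)] //=.
by congr Some; apply: val_inj.
Qed.

Section Bdir.
Variables (s : signature) (X A : sstructure s) (k : nat).
Variable W : star_univ k X -> star_univ k A -> rat.
Hypothesis W1 : forall u v, 0 <= W u v <= 1.
Hypothesis W2 : forall u, \sum_v W u v = 1.
Hypothesis W3 : forall u v, W u v != 0 -> (ukind v == ukind u) && consistent (useq u) (useq v).
Hypothesis W4 : forall (j j' : 'I_k) (x : (j.+1).-tuple X) (i : (j'.+1).-tuple 'I_(j.+1))
          (b : (j'.+1).-tuple A),
          W (tup (proj x i)) (tup b) =
          \sum_(a : (j.+1).-tuple A | proj a i == b) W (tup x) (tup a).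
Hypothesis W5 : forall (R : sym s) (t : {t : (ar R).-tuple X | t \in Defs.rel X R}) (j : 'I_k)
          (i : (j.+1).-tuple 'I_(ar R)) (b : (j.+1).-tuple A),
          W (tup (proj (val t) i)) (tup b) =
          \sum_(d : {t : (ar R).-tuple A | t \in Defs.rel A R} | proj (val d) i == b)
             W (cst k t) (cst k d).

Local Notation consS := (@consistent _ (star k X) (star k A)).
Local Notation ptS := (@pt _ (star k X) (star k A)).

Lemma W_tup_shape (j : 'I_k) (x : (j.+1).-tuple X) v :
  W (tup x) v != 0 -> exists2 a : (j.+1).-tuple A, consistent x a & v = tup a.
Proof.
move/W3 => /andP[kv cv].
case: v kv cv => [[j' a]|d] //= /eqP [e]; subst j' => cv.
by exists a.
Qed.

Lemma W_cst_shape (R : sym s) (t : {t : (ar R).-tuple X | t \in Defs.rel X R}) v :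
  W (cst k t) v != 0 ->
  exists2 d : {t : (ar R).-tuple A | t \in Defs.rel A R}, consistent (val t) (val d) & v = cst k d.
Proof.
move/W3 => /andP[kv cv].
case: v kv cv => [[j' a]|[R' d]] //= /eqP [e]; subst R' => cv.
by exists d.
Qed.

Lemma kind_tup (j : 'I_k) (v : star_univ k A) :
  ukind v = inl j -> exists b : (j.+1).-tuple A, v = tup b.
Proof. by case: v => [[j' b]|d] //= [e]; subst j'; exists b. Qed.

Lemma pattern_cons n (x : n.-tuple X) (a : n.-tuple A) T :
  consistent x a -> pattern x T -> pattern a T.
Proof.
move=> c /forallP px; apply/forallP => i; apply/implyP => iT.
apply/forallP => i'; apply/implyP => i'T.
have /implyP/(_ iT)/forallP/(_ i')/implyP/(_ i'T)/eqP e := px i.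
have := ext_tnth i c; rewrite e (ext_tnth i' c) => -[->].
by [].
Qed.

Lemma cons_T2 (j j' : 'I_k) (i : (j'.+1).-tuple 'I_(j.+1)) (x : (j.+1).-tuple X)
  (a : (j.+1).-tuple A) :
  consistent x a -> consS [tuple tup x; tup (proj x i)] [tuple tup a; tup (proj a i)].
Proof.
move=> c; rewrite /= consistent_pair; apply/implyP => /eqP e.
have ej : j = j' by have := congr1 (@ukind _ _ _) e => -[].
have es : (x : seq X) = proj x i by have := congr1 (@useq _ _ _) e.
apply/eqP; apply: uinj; first by rewrite /= ej.
rewrite !useq_tup; apply: (inj_map (@Some_inj _)).
by rewrite -(consistent_proj i c) -es; apply/esym/eqP.
Qed.

Lemma cons_R2 (R : sym s) (j : 'I_k) (i : (j.+1).-tuple 'I_(ar R))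
  (t : {t : (ar R).-tuple X | t \in Defs.rel X R}) (d : {t : (ar R).-tuple A | t \in Defs.rel A R}) :
  consS [tuple cst k t; tup (proj (val t) i)] [tuple cst k d; tup (proj (val d) i)].
Proof. by rewrite /= consistent_pair. Qed.


Lemma crux_T1 (j : 'I_k) (T : {set 'I_j.+1}) (x : (j.+1).-tuple X) v :
  pattern x T ->
  W (tup x) v = \sum_(t' | [&& t' \in star_rel A (inl (inl (inl (existT _ j T))) : star_sym s k),
       consS [tuple tup x] t' & tnth t' ord0 == v]) W (tup x) (tnth t' ord0).
Proof.
move=> px.
pose h (a : (j.+1).-tuple A) : (star_ar (inl (inl (inl (existT _ j T))) : star_sym s k)).-tuple (star_univ k A) :=
  [tuple tup a].
rewrite (sum_bij (h := h) (Q := fun a => pattern a T && (tup a == v))).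
- symmetry; apply: (sum_inj_eq (h := fun a : (j.+1).-tuple A => tup a)).
    by move=> a b /tup_inj.
  move/W_tup_shape => [a ca ->]; exists a => //.
  exact: pattern_cons ca px.
- by move=> a b _ _ /(congr1 (fun t => tnth t ord0)) /tup_inj.
- move=> a /andP[pa va]; rewrite va andbT.
  by rewrite consistent1 andbT; apply/imsetP; exists a; rewrite ?inE.
move=> t' /and3P[/imsetP[a]]; rewrite inE => pa -> _ va.
by exists a => //; apply/andP; split.
Qed.

Lemma crux_R1 (R : sym s) (T : {set 'I_(ar R)}) (t : {t : (ar R).-tuple X | t \in Defs.rel X R}) v :
  pattern (val t) T ->
  W (cst k t) v = \sum_(t' | [&& t' \in star_rel A (inl (inr (existT _ R T)) : star_sym s k),
       consS [tuple cst k t] t' & tnth t' ord0 == v]) W (cst k t) (tnth t' ord0).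
Proof.
move=> px.
pose h (d : {t : (ar R).-tuple A | t \in Defs.rel A R}) :
  (star_ar (inl (inr (existT _ R T)) : star_sym s k)).-tuple (star_univ k A) := [tuple cst k d].
rewrite (sum_bij (h := h) (Q := fun d => pattern (val d) T && (cst k d == v))).
- symmetry; apply: (sum_inj_eq (h := fun d => cst k d)).
    by move=> a b /cst_inj.
  move/W_cst_shape => [d cd ->]; exists d => //.
  exact: pattern_cons cd px.
- by move=> a b _ _ /(congr1 (fun t => tnth t ord0)) /cst_inj.
- move=> a /andP[pa va]; rewrite va andbT.
  by rewrite consistent1 andbT; apply/imsetP; exists a; rewrite ?inE.
move=> t' /and3P[/imsetP[a]]; rewrite inE => pa -> _ va.
by exists a => //; apply/andP; split.
Qed.

Lemma crux_T2_0 (j j' : 'I_k) (i : (j'.+1).-tuple 'I_(j.+1)) (x : (j.+1).-tuple X) v :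
  W (tup x) v = \sum_(t' | [&& t' \in star_rel A (inl (inl (inr (existT _ (j, j') i))) : star_sym s k),
       consS [tuple tup x; tup (proj x i)] t' & tnth t' ord0 == v]) W (tup x) (tnth t' ord0).
Proof.
pose h (a : (j.+1).-tuple A) :
  (star_ar (inl (inl (inr (existT _ (j, j') i))) : star_sym s k)).-tuple (star_univ k A) :=
  [tuple tup a; tup (proj a i)].
rewrite (sum_bij (h := h) (Q := fun a => consS [tuple tup x; tup (proj x i)] (h a) && (tup a == v))).
- symmetry; apply: (sum_inj_eq (h := fun a : (j.+1).-tuple A => tup a)).
    by move=> a b /tup_inj.
  move/W_tup_shape => [a ca ->]; exists a => //.
  exact: cons_T2.
- by move=> a b _ _ /(congr1 (fun t => tnth t ord0)) /tup_inj.
- move=> a /andP[ca va]; rewrite va ca andbT andbT.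
  by apply/imsetP; exists a.
move=> t' /and3P[/imsetP[a _ ->] ca va].
by exists a => //; apply/andP; split.
Qed.

Lemma crux_T2_1 (j j' : 'I_k) (i : (j'.+1).-tuple 'I_(j.+1)) (x : (j.+1).-tuple X) v :
  W (tup (proj x i)) v =
  \sum_(t' | [&& t' \in star_rel A (inl (inl (inr (existT _ (j, j') i))) : star_sym s k),
       consS [tuple tup x; tup (proj x i)] t' & tnth t' ord_max == v]) W (tup x) (tnth t' ord0).
Proof.
pose h (a : (j.+1).-tuple A) :
  (star_ar (inl (inl (inr (existT _ (j, j') i))) : star_sym s k)).-tuple (star_univ k A) :=
  [tuple tup a; tup (proj a i)].
rewrite (sum_bij (h := h) (Q := fun a => consS [tuple tup x; tup (proj x i)] (h a) && (tup (proj a i) == v))).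
- case: (boolP (ukind v == inl j')) => kv.
    have [b ->] := kind_tup (eqP kv).
    rewrite W4; apply: eq_bigl_supp => a /W3 /andP[_ ca] /=.
    by rewrite (cons_T2 i ca) /=; apply/eqP/eqP => [->|/tup_inj].
  transitivity (0 : rat).
    apply/eqP; apply: contraNT kv => /W3 /andP[kv _].
    by [].
  symmetry; apply: big1 => a /andP[_ /eqP e].
  by move: kv; rewrite -e eqxx.
- by move=> a b _ _ /(congr1 (fun t => tnth t ord0)) /tup_inj.
- move=> a /andP[ca va]; rewrite va ca andbT andbT.
  by apply/imsetP; exists a.
move=> t' /and3P[/imsetP[a _ ->] ca va].
by exists a => //; apply/andP; split.
Qed.

Lemma crux_R2_0 (R : sym s) (j : 'I_k) (i : (j.+1).-tuple 'I_(ar R))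
  (t : {t : (ar R).-tuple X | t \in Defs.rel X R}) v :
  W (cst k t) v = \sum_(t' | [&& t' \in star_rel A (inr (existT _ (R, j) i) : star_sym s k),
       consS [tuple cst k t; tup (proj (val t) i)] t' & tnth t' ord0 == v]) W (cst k t) (tnth t' ord0).
Proof.
pose h (d : {t : (ar R).-tuple A | t \in Defs.rel A R}) :
  (star_ar (inr (existT _ (R, j) i) : star_sym s k)).-tuple (star_univ k A) :=
  [tuple cst k d; tup (proj (val d) i)].
rewrite (sum_bij (h := h) (Q := fun d => cst k d == v)).
- symmetry; rewrite (eq_bigl (fun d => true && (cst k d == v))) //.
  apply: (sum_inj_eq (h := fun d => cst k d)).
    by move=> a b /cst_inj.
  by move/W_cst_shape => [d cd ->]; exists d.
- by move=> a b _ _ /(congr1 (fun t => tnth t ord0)) /cst_inj.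
- move=> a va; rewrite va cons_R2 andbT andbT.
  by apply/imsetP; exists a.
move=> t' /and3P[/imsetP[a _ ->] ca va].
by exists a.
Qed.

Lemma crux_R2_1 (R : sym s) (j : 'I_k) (i : (j.+1).-tuple 'I_(ar R))
  (t : {t : (ar R).-tuple X | t \in Defs.rel X R}) v :
  W (tup (proj (val t) i)) v =
  \sum_(t' | [&& t' \in star_rel A (inr (existT _ (R, j) i) : star_sym s k),
       consS [tuple cst k t; tup (proj (val t) i)] t' & tnth t' ord_max == v]) W (cst k t) (tnth t' ord0).
Proof.
pose h (d : {t : (ar R).-tuple A | t \in Defs.rel A R}) :
  (star_ar (inr (existT _ (R, j) i) : star_sym s k)).-tuple (star_univ k A) :=
  [tuple cst k d; tup (proj (val d) i)].
rewrite (sum_bij (h := h) (Q := fun d => tup (proj (val d) i) == v)).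
- case: (boolP (ukind v == inl j)) => kv.
    have [b ->] := kind_tup (eqP kv).
    rewrite W5; apply: eq_bigl => d /=.
    by apply/eqP/eqP => [->|/tup_inj].
  transitivity (0 : rat).
    apply/eqP; apply: contraNT kv => /W3 /andP[kv _].
    by [].
  symmetry; apply: big1 => a /eqP e.
  by move: kv; rewrite -e eqxx.
- by move=> a b _ _ /(congr1 (fun t => tnth t ord0)) /cst_inj.
- move=> a va; rewrite va cons_R2 andbT andbT.
  by apply/imsetP; exists a.
move=> t' /and3P[/imsetP[a _ ->] ca va].
by exists a.
Qed.

Lemma crux (c : cons_of (star k X)) (m : 'I_(ar (cons_sym c))) v :
  W (tnth (Defs.cons_tuple c) m) v =
  \sum_(t' | [&& t' \in Defs.rel (star k A) (cons_sym c), consS (Defs.cons_tuple c) t'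
              & tnth t' m == v])
    (if [pick m0 : 'I_(ar (cons_sym c)) | val m0 == 0%N] is Some m0
     then W (tnth (Defs.cons_tuple c) m0) (tnth t' m0) else 0).
Proof.
case: c m => [[[[[j T]|[[j j'] i]]|[R T]]|[[R j] i]] [t Ht]] m /=; rewrite pick_ord0.
- have [x px et] : exists2 x, pattern x T & t = [tuple tup x].
    by case/imsetP: (Ht) => x; rewrite inE => ??; exists x.
  subst t; rewrite (ord1 m); exact: crux_T1 px.
- have [x et] : exists x, t = [tuple tup x; tup (proj x i)].
    by case/imsetP: (Ht) => x _ ?; exists x.
  subst t; case: m => [[|[|mm]] Hm] //.
    have -> : Ordinal Hm = ord0 by apply: val_inj.
    exact: crux_T2_0.
  have -> : Ordinal Hm = ord_max by apply: val_inj.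
  exact: crux_T2_1.
- have [t0 pt0 et] : exists2 t0, pattern (val t0) T & t = [tuple cst k t0].
    by case/imsetP: (Ht) => t0; rewrite inE => ??; exists t0.
  subst t; rewrite (ord1 m); exact: crux_R1 pt0.
- have [t0 et] : exists t0, t = [tuple cst k t0; tup (proj (val t0) i)].
    by case/imsetP: (Ht) => t0 _ ?; exists t0.
  subst t; case: m => [[|[|mm]] Hm] //.
    have -> : Ordinal Hm = ord0 by apply: val_inj.
    exact: crux_R2_0.
  have -> : Ordinal Hm = ord_max by apply: val_inj.
  exact: crux_R2_1.
Qed.

Definition Wo (u : star_univ k X) (o : option (star_univ k A)) : rat :=
  if o is Some v then W u v else 0.
Definition PS (f : pfun (star k X) (star k A)) : rat :=
  \sum_(u | dom f == [set u]) Wo u (f u).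
Definition QS (c : cons_of (star k X)) (g : pfun (star k X) (star k A)) : rat :=
  if sat c g then
    (if [pick m : 'I_(ar (cons_sym c)) | val m == 0%N] is Some m
     then Wo (tnth (Defs.cons_tuple c) m) (g (tnth (Defs.cons_tuple c) m)) else 0)
  else 0.

Lemma Wo_bounds u o : 0 <= Wo u o <= 1.
Proof. by case: o => [v|] /=; rewrite ?W1 ?lexx ?ler01. Qed.

Lemma PS_pt u v : PS (ptS u v) = W u v.
Proof.
rewrite /PS dom_pt (big_pred1 u) ?ffunE ?eqxx // => u' /=.
by apply/eqP/eqP => [/set1_inj ->|->].
Qed.

Lemma PS_bounds f : (1 <= #|dom f| <= 1)%N -> 0 <= PS f <= 1.
Proof.
move=> H; have /cards1P [u du] : #|dom f| == 1%N by rewrite eqn_leq andbC.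
by have [v ->] := dom1_pt du; rewrite PS_pt W1.
Qed.

Lemma QS_bounds c g : 0 <= QS c g <= 1.
Proof.
rewrite /QS; case: ifP => _; last by rewrite lexx ler01.
by case: pickP => [m _|_]; rewrite ?Wo_bounds ?lexx ?ler01.
Qed.

Lemma QS_unsat c f : dom f = cset c -> ~~ sat c f -> QS c f = 0.
Proof. by move=> _ /negbTE ns; rewrite /QS ns. Qed.

Lemma PS_sum (V : {set star k X}) : (1 <= #|V| <= 1)%N -> \sum_(f | dom f == V) PS f = 1.
Proof.
move=> H; have /cards1P [u ->] : #|V| == 1%N by rewrite eqn_leq andbC.
rewrite -(W2 u); symmetry.
rewrite (eq_bigr (fun v => PS (ptS u v))); last by move=> v _; rewrite PS_pt.
symmetry; apply: (sum_bij (h := ptS u)) => //.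
- by move=> a b _ _ /(congr1 (fun f : pfun (star k X) (star k A) => f u)); rewrite !ffunE eqxx => -[].
- by move=> v _; rewrite dom_pt.
by move=> f /eqP /dom1_pt [v ->]; exists v.
Qed.

Lemma PS_marg (U V : {set star k X}) (f : pfun (star k X) (star k A)) :
  U \subset V -> (1 <= #|U|)%N -> (#|V| <= 1)%N -> dom f = U ->
  PS f = \sum_(g | (dom g == V) && restricts g f) PS g.
Proof.
move=> sUV U1 V1 df.
have UV : U = V by apply/eqP; rewrite eqEcard sUV (leq_trans V1 U1).
subst V; rewrite (big_pred1 f) // => g /=.
case: (eqVneq (dom g) U) => [dg|ne] /=; first by rewrite restricts_same // dg df.
by apply/esym/eqP => gf; move: ne; rewrite gf df eqxx.
Qed.

Lemma PS_cons c (U : {set star k X}) (f : pfun (star k X) (star k A)) :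
  U \subset cset c -> (1 <= #|U| <= 1)%N -> dom f = U ->
  PS f = \sum_(g | (dom g == cset c) && restricts g f) QS c g.
Proof.
move=> sU HU df.
have /cards1P [u Uu] : #|U| == 1%N by rewrite eqn_leq andbC.
have [v fv] := dom1_pt (etrans df Uu); subst f.
have : u \in cset c by rewrite -sub1set -Uu.
rewrite inE => /tnthP [m um].
rewrite PS_pt um (cons_sum QS_unsat) crux.
apply: eq_bigr => t' /and3P[Ht' ct _]; rewrite /QS.
have -> : sat c (ext (Defs.cons_tuple c) t').
  rewrite sat_map; apply/existsP; exists t'; rewrite Ht' /=.
  exact: ct.
by case: pickP => [m0 _|//]; rewrite (ext_tnth m0 ct).
Qed.

Lemma good_sa1 : SA_feasible (star k X) (star k A) 1.
Proof.
exists PS, QS; split.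
- split=> [f|c f _]; [exact: PS_bounds | exact: QS_bounds].
- exact: PS_sum.
- exact: PS_marg.
- exact: PS_cons.
- exact: QS_unsat.
Qed.
End Bdir.


Local Close Scope ring_scope.
Unset Implicit Arguments.

Theorem lemma7p3 (s : signature) (X A : sstructure s) (k : nat) :
  (forall R : sym s, 0 < ar R)%N -> (1 <= k)%N ->
  SA_feasible X A k <-> SA_feasible (star k X) (star k A) 1.
Proof.
move=> ar_pos k_pos; split.
- case=> p [q [[pb qb] psum pmarg pcons punsat]].
  have [W1 W2 W3 W4 W5] := fwd_good ar_pos k_pos pb qb psum pmarg pcons punsat.
  exact: (good_sa1 W1 W2 W3 W4 W5).
- case=> P [Q [[pb qb] psum pmarg pcons punsat]].
  have [W1 W2 W3 W4 W5] := sa1_good pb psum pcons punsat.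
  exact: (bwd_feasible ar_pos W1 W2 W3 W4 W5).
Qed.
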